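(* For every $\beta>1$ there is a constant $C(\beta)$ such that for all integers $j\ge1$, $$\sum_{l\ge1}\frac{1}{(1+|j-l|)(1+\ln l)^\beta}\le C(\beta).$$ *)

(* Defs.v *)
From Stdlib Require Import Reals.
From Coquelicot Require Import Coquelicot.
Open Scope R_scope.

(* The summand 1 / ((1 + |j - l|) (1 + ln l)^beta), with real exponent via Rpower
   (base 1 + ln l >= 1 > 0 for l >= 1). *)
Definition term7p1 (beta : R) (j l : nat) : R :=
  / ((1 + Rabs (INR j - INR l)) * Rpower (1 + ln (INR l)) beta).

(* Main.v *)
Require Import Defs.
From Stdlib Require Import Reals Lra Lia.
From Coquelicot Require Import Coquelicot.
Open Scope R_scope.

Lemma ln_le_sub1 y : 0 < y -> ln y <= y - 1.
Proof. intros Hy. pose proof (exp_ineq1_le (ln y)). rewrite exp_ln in H; lra. Qed.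

Lemma ln_diff_ge k : 0 < k -> / (k + 1) <= ln (k + 1) - ln k.
Proof.
  intros Hk. pose proof (ln_le_sub1 (k / (k+1))) as H.
  assert (0 < k / (k+1)) by (apply Rdiv_lt_0_compat; lra).
  specialize (H H0). rewrite ln_div in H by lra.
  assert (k / (k+1) - 1 = - / (k+1)) by (field; lra). lra.
Qed.

Definition FF (beta x : R) : R := exp ((1 - beta) * ln (1 + ln x)) / (beta - 1).

Lemma lemA beta x : 1 < beta -> 2 <= x ->
  / (x * Rpower (1 + ln x) beta) <= FF beta (x - 1) - FF beta x.
Proof.
  intros Hb Hx.
  assert (Hl1 : 0 <= ln (x - 1)) by (rewrite <- ln_1; apply ln_le; lra).
  assert (Hlx : ln (x - 1) <= ln x) by (apply ln_le; lra).
  set (u := 1 + ln x). set (v := 1 + ln (x - 1)).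
  assert (Hv : 1 <= v) by (unfold v; lra).
  assert (Hu : v <= u) by (unfold u, v; lra).
  set (a := ln u). set (b := ln v).
  assert (h1 : (u - v) / u <= a - b).
  { pose proof (ln_le_sub1 (v / u)) as H.
    assert (0 < v / u) by (apply Rdiv_lt_0_compat; lra).
    specialize (H H0). rewrite ln_div in H by lra. fold a b in H.
    assert (v / u - 1 = - ((u - v) / u)) by (field; lra). lra. }
  assert (h2 : / x <= u - v).
  { pose proof (ln_le_sub1 ((x - 1) / x)) as H.
    assert (0 < (x - 1) / x) by (apply Rdiv_lt_0_compat; lra).
    specialize (H H0). rewrite ln_div in H by lra.
    assert ((x - 1) / x - 1 = - / x) by (field; lra). unfold u, v. lra. }
  set (E := exp ((1 - beta) * a)).
  assert (HE : 0 < E) by apply exp_pos.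
  assert (h3 : exp ((1 - beta) * b) >= E * (1 + (1 - beta) * (b - a))).
  { replace ((1 - beta) * b) with ((1 - beta) * a + (1 - beta) * (b - a)) by ring.
    rewrite exp_plus. fold E. pose proof (exp_ineq1_le ((1 - beta) * (b - a))).
    apply Rle_ge, Rmult_le_compat_l; lra. }
  assert (HR : E * Rpower u beta = u).
  { unfold E, Rpower. rewrite <- exp_plus. fold a.
    replace ((1 - beta) * a + beta * a) with a by ring. unfold a. apply exp_ln. lra. }
  assert (Hpu : 0 < u) by lra.
  assert (HRp : 0 < Rpower u beta) by (unfold Rpower; apply exp_pos).
  unfold FF. fold u v a b. fold E.
  assert (Hxinv : 0 < / x) by (apply Rinv_0_lt_compat; lra).
  assert (h4 : E * (/ x) / u <= E * (a - b)).
  { unfold Rdiv. rewrite Rmult_assoc. apply Rmult_le_compat_l. lra.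
    apply Rle_trans with ((u - v) / u); [|exact h1].
    unfold Rdiv. apply Rmult_le_compat_r. left; apply Rinv_0_lt_compat; lra. exact h2. }
  assert (Heq : / (x * Rpower u beta) = E * (/ x) / u).
  { assert (HR' : Rpower u beta = u / E) by (apply (Rmult_eq_reg_l E); [rewrite HR; field; lra | lra]).
    rewrite HR'. field. repeat split; lra. }
  rewrite Heq.
  apply Rle_trans with (E * (a - b)); [exact h4|].
  apply (Rmult_le_reg_l (beta - 1)). lra.
  replace ((beta - 1) * (exp ((1 - beta) * b) / (beta - 1) - E / (beta - 1)))
    with (exp ((1 - beta) * b) - E) by (field; lra).
  nra.
Qed.

Definition TT (J x : R) : R :=
  if Rle_dec x J then -2 * ln (1 + J - x) else 2 * ln (1 + x - J).

Lemma ln_diff2 k : 1 <= k -> / k <= 2 * (ln (k + 1) - ln k).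
Proof.
  intros Hk. pose proof (ln_diff_ge k ltac:(lra)).
  assert (/ k <= 2 * / (k + 1)).
  { apply (Rmult_le_reg_l (k * (k+1))). nra.
    replace (k * (k + 1) * / k) with (k + 1) by (field; lra).
    replace (k * (k + 1) * (2 * / (k + 1))) with (2 * k) by (field; lra). lra. }
  lra.
Qed.

Lemma TT_incr (j l : nat) : (1 <= l)%nat ->
  / (1 + Rabs (INR j - INR l)) <= TT (INR j) (INR l) - TT (INR j) (INR l - 1).
Proof.
  intros Hl. assert (Hx : 1 <= INR l) by (apply (le_INR 1); lia).
  assert (HJ : 0 <= INR j) by apply pos_INR.
  unfold TT. destruct (Compare_dec.le_lt_dec l j) as [H|H].
  - apply le_INR in H.
    destruct (Rle_dec (INR l) (INR j)); [|lra].
    destruct (Rle_dec (INR l - 1) (INR j)); [|lra].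
    rewrite Rabs_pos_eq by lra.
    pose proof (ln_diff2 (1 + INR j - INR l) ltac:(lra)).
    replace (1 + INR j - (INR l - 1)) with (1 + INR j - INR l + 1) by ring.
    replace (1 + (INR j - INR l)) with (1 + INR j - INR l) by ring. lra.
  - assert (H' : INR j + 1 <= INR l) by (rewrite <- S_INR; apply le_INR; lia).
    destruct (Rle_dec (INR l) (INR j)); [lra|].
    rewrite Rabs_left1 by lra.
    assert (Hprev : TT (INR j) (INR l - 1) = 2 * ln (INR l - INR j)).
    { unfold TT. destruct (Rle_dec (INR l - 1) (INR j)).
      - assert (INR l - 1 = INR j) by lra. rewrite H0.
        replace (1 + INR j - INR j) with 1 by ring.
        replace (INR l - INR j) with 1 by lra. rewrite ln_1. ring.
      - f_equal. f_equal. ring. }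
    unfold TT in Hprev. rewrite Hprev.
    pose proof (ln_diff_ge (INR l - INR j) ltac:(lra)).
    replace (INR l - INR j + 1) with (1 + INR l - INR j) in H0 by ring.
    replace (1 + - (INR j - INR l)) with (1 + INR l - INR j) by ring.
    assert (0 < / (1 + INR l - INR j)) by (apply Rinv_0_lt_compat; lra).
    lra.
Qed.

Lemma TT_upper J x : 0 <= J -> 0 <= x <= 2 * J -> TT J x <= 2 * ln (1 + J).
Proof.
  intros HJ Hx. unfold TT. destruct (Rle_dec x J).
  - assert (0 <= ln (1 + J - x)) by (rewrite <- ln_1; apply ln_le; lra).
    assert (0 <= ln (1 + J)) by (rewrite <- ln_1; apply ln_le; lra). lra.
  - assert (ln (1 + x - J) <= ln (1 + J)) by (apply ln_le; lra). lra.
Qed.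

Lemma TT_zero J : 0 <= J -> TT J 0 = -2 * ln (1 + J).
Proof. intros HJ. unfold TT. destruct (Rle_dec 0 J); [|lra]. f_equal. f_equal. ring. Qed.

Definition cc beta (j : nat) := Rpower 2 beta / Rpower (2 + ln (INR j)) beta.

Definition WW beta (j l : nat) : R :=
  -2 * FF beta (INR (Nat.max l 1))
  + cc beta j * TT (INR j) (INR (Nat.min l (2 * j)))
  + Rmin (INR l) (sqrt (INR j)) / sqrt (INR j).

Lemma Rpower_pos x y : 0 < Rpower x y.
Proof. unfold Rpower; apply exp_pos. Qed.

Lemma cc_pos beta j : 0 < cc beta j.
Proof. unfold cc. apply Rdiv_lt_0_compat; apply Rpower_pos. Qed.

Lemma step beta j n : 1 < beta -> (1 <= j)%nat ->
  term7p1 beta j (S n) <= WW beta j (S n) - WW beta j n.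
Proof.
  intros Hb Hj.
  set (x := INR (S n)).
  assert (Hxn : INR n = x - 1) by (unfold x; rewrite S_INR; ring).
  assert (Hx1 : 1 <= x) by (unfold x; rewrite S_INR; pose proof (pos_INR n); lra).
  set (J := INR j).
  assert (HJ : 1 <= J) by (unfold J; apply (le_INR 1); lia).
  set (s := sqrt J).
  assert (Hs : 0 < s) by (unfold s; apply sqrt_lt_R0; lra).
  assert (Hss : s * s = J) by (unfold s; apply sqrt_sqrt; lra).
  set (u := 1 + ln x).
  assert (Hu : 1 <= u) by (unfold u; assert (0 <= ln x) by (rewrite <- ln_1; apply ln_le; lra); lra).
  set (R := Rpower u beta).
  assert (HR : 1 <= R).
  { unfold R. rewrite <- (Rpower_O u) by lra. apply Rle_Rpower; lra. }
  assert (Hterm : term7p1 beta j (S n) = / ((1 + Rabs (J - x)) * R)) by reflexivity.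
  set (d1 := -2 * FF beta (INR (Nat.max (S n) 1)) - -2 * FF beta (INR (Nat.max n 1))).
  set (d2 := cc beta j * TT J (INR (Nat.min (S n) (2 * j))) - cc beta j * TT J (INR (Nat.min n (2 * j)))).
  set (d3 := Rmin x s / s - Rmin (INR n) s / s).
  assert (Hsplit : WW beta j (S n) - WW beta j n = d1 + d2 + d3) by (unfold WW, d1, d2, d3; fold x J s; ring).
  rewrite Hsplit, Hterm.
  assert (E1 : (1 <= n)%nat -> d1 = 2 * (FF beta (x - 1) - FF beta x)).
  { intros Hn. unfold d1. rewrite Nat.max_l by lia. rewrite Nat.max_l by lia. fold x. rewrite Hxn. ring. }
  assert (P1 : 0 <= d1).
  { destruct n as [|n'].
    - unfold d1. simpl. lra.
    - rewrite E1 by lia. assert (2 <= x) by (unfold x; rewrite !S_INR; pose proof (pos_INR n'); lra).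
      pose proof (lemA beta x Hb H).
      assert (0 < / (x * Rpower (1 + ln x) beta)).
      { apply Rinv_0_lt_compat. apply Rmult_lt_0_compat. lra. apply Rpower_pos. }
      lra. }
  assert (E2 : (S n <= 2 * j)%nat -> d2 = cc beta j * (TT J x - TT J (x - 1))).
  { intros Hn. unfold d2. rewrite Nat.min_l by lia. rewrite Nat.min_l by lia. fold x. rewrite Hxn. ring. }
  assert (P2 : 0 <= d2).
  { destruct (Compare_dec.le_lt_dec (S n) (2 * j)) as [H|H].
    - rewrite E2 by exact H. pose proof (TT_incr j (S n) ltac:(lia)). fold J x in H0.
      assert (0 < / (1 + Rabs (J - x))) by (apply Rinv_0_lt_compat; pose proof (Rabs_pos (J - x)); lra).
      pose proof (cc_pos beta j). nra.
    - unfold d2. rewrite !Nat.min_r by lia. lra. }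
  assert (P3 : 0 <= d3).
  { unfold d3. unfold Rdiv. rewrite <- Rmult_minus_distr_r. apply Rmult_le_pos.
    - rewrite Hxn. unfold Rmin. destruct (Rle_dec x s); destruct (Rle_dec (x - 1) s); lra.
    - left; apply Rinv_0_lt_compat; lra. }
  assert (HA : 0 < 1 + Rabs (J - x)) by (pose proof (Rabs_pos (J - x)); lra).
  destruct (Compare_dec.le_lt_dec (2 * j) (S n)) as [Ha|Ha].
  -
    assert (H2J : 2 * J <= x) by (unfold x, J; rewrite <- (mult_INR 2); apply le_INR; exact Ha).
    assert (Hn : (1 <= n)%nat) by lia.
    rewrite (E1 Hn).
    assert (Hx2 : 2 <= x) by lra.
    pose proof (lemA beta x Hb Hx2). fold u R in H.
    assert (/ ((1 + Rabs (J - x)) * R) <= 2 * / (x * R)).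
    { rewrite Rabs_left1 by lra.
      apply (Rmult_le_reg_l ((1 + - (J - x)) * R * (x * R))).
      apply Rmult_lt_0_compat; apply Rmult_lt_0_compat; lra.
      replace ((1 + - (J - x)) * R * (x * R) * / ((1 + - (J - x)) * R)) with (x * R) by (field; split; lra).
      replace ((1 + - (J - x)) * R * (x * R) * (2 * / (x * R))) with (2 * (1 + - (J - x)) * R) by (field; split; lra).
      nra. }
    lra.
  - destruct (Compare_dec.le_lt_dec j (S n * S n)) as [Hb2|Hc].
    +
      rewrite (E2 ltac:(lia)).
      pose proof (TT_incr j (S n) ltac:(lia)). fold J x in H.
      assert (HJx : J <= x * x) by (unfold J, x; rewrite <- mult_INR; apply le_INR; exact Hb2).
      assert (HlnJ : ln J <= 2 * ln x).
      { replace (2 * ln x) with (ln (x * x)) by (rewrite ln_mult by lra; ring). apply ln_le; lra. }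
      assert (HlnJ0 : 0 <= ln J) by (rewrite <- ln_1; apply ln_le; lra).
      assert (Hu2 : (2 + ln J) / 2 <= u) by (unfold u; lra).
      assert (HRb : Rpower ((2 + ln J) / 2) beta <= R) by (apply Rle_Rpower_l; lra).
      assert (Hmd : Rpower ((2 + ln J) / 2) beta * Rpower 2 beta = Rpower (2 + ln J) beta).
      { rewrite Rpower_mult_distr by lra. f_equal. field. }
      assert (HinvR : / R <= cc beta j).
      { unfold cc. fold J. rewrite <- Hmd.
        pose proof (Rpower_pos ((2 + ln J) / 2) beta). pose proof (Rpower_pos 2 beta).
        replace (Rpower 2 beta / (Rpower ((2 + ln J) / 2) beta * Rpower 2 beta))
          with (/ Rpower ((2 + ln J) / 2) beta) by (field; lra).
        apply Rinv_le_contravar; lra. }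
      rewrite Rinv_mult.
      assert (0 < / (1 + Rabs (J - x))) by (apply Rinv_0_lt_compat; lra).
      assert (0 < / R) by (apply Rinv_0_lt_compat; lra).
      assert (/ (1 + Rabs (J - x)) * / R <= cc beta j * (TT J x - TT J (x - 1))).
      { apply Rle_trans with (/ (1 + Rabs (J - x)) * cc beta j). apply Rmult_le_compat_l; lra.
        rewrite Rmult_comm. apply Rmult_le_compat_l. left; apply cc_pos. exact H. }
      lra.
    +
      assert (HxJ : x * x <= J) by (unfold J, x; rewrite <- mult_INR; apply le_INR; lia).
      assert (Hxs : x <= s).
      { unfold s. rewrite <- (sqrt_square x) by lra. apply sqrt_le_1_alt. exact HxJ. }
      assert (Ed3 : d3 = / s).
      { unfold d3. rewrite Hxn. unfold Rmin. destruct (Rle_dec x s); [|lra].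
        destruct (Rle_dec (x - 1) s); [|lra]. field. lra. }
      rewrite Ed3.
      assert (Hge : s <= 1 + Rabs (J - x)).
      { assert (J - x <= Rabs (J - x)) by apply Rle_abs. nra. }
      assert (/ ((1 + Rabs (J - x)) * R) <= / s).
      { apply Rinv_le_contravar. lra. nra. }
      lra.
Qed.

Lemma WW_bound beta j N : 1 < beta -> (1 <= j)%nat ->
  WW beta j (S N) - WW beta j 0 <= 2 / (beta - 1) + 4 * Rpower 2 beta + 1.
Proof.
  intros Hb Hj.
  set (J := INR j).
  assert (HJ : 1 <= J) by (unfold J; apply (le_INR 1); lia).
  set (s := sqrt J).
  assert (Hs : 0 < s) by (unfold s; apply sqrt_lt_R0; lra).
  unfold WW. fold J s.
  replace (INR (Nat.max 0 1)) with 1 by (simpl; ring).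
  replace (INR (Nat.min 0 (2 * j))) with 0 by (simpl; ring).
  rewrite TT_zero by lra.
  assert (HF1 : FF beta 1 = / (beta - 1)).
  { unfold FF. rewrite ln_1, Rplus_0_r, ln_1, Rmult_0_r, exp_0. unfold Rdiv; ring. }
  rewrite HF1.
  assert (HF : 0 <= FF beta (INR (Nat.max (S N) 1))).
  { unfold FF. apply Rmult_le_pos. left; apply exp_pos. left; apply Rinv_0_lt_compat; lra. }
  set (m := INR (Nat.min (S N) (2 * j))).
  assert (Hm : 0 <= m <= 2 * J).
  { split. apply pos_INR. unfold m, J. rewrite <- (mult_INR 2). apply le_INR. lia. }
  pose proof (TT_upper J m ltac:(lra) Hm).
  assert (Hr0 : Rmin 0 s = 0) by (unfold Rmin; destruct (Rle_dec 0 s); lra).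
  replace (INR 0) with 0 by reflexivity. rewrite Hr0.
  assert (Hr1 : Rmin (INR (S N)) s / s <= 1).
  { unfold Rdiv. apply (Rmult_le_reg_r s). lra. rewrite Rmult_assoc, Rinv_l by lra.
    pose proof (Rmin_r (INR (S N)) s). lra. }
  assert (Hln0 : 0 <= ln (1 + J)) by (rewrite <- ln_1; apply ln_le; lra).
  assert (HlnJ0 : 0 <= ln J) by (rewrite <- ln_1; apply ln_le; lra).
  assert (Hln : ln (1 + J) <= Rpower (2 + ln J) beta).
  { apply Rle_trans with (ln 2 + ln J).
    - rewrite <- ln_mult by lra. apply ln_le; lra.
    - assert (Hl2 : ln 2 < 1) by (rewrite <- (ln_exp 1); apply ln_increasing; [lra | pose proof (exp_ineq1 1 ltac:(lra)); lra]). assert (Hq : Rpower (2 + ln J) 1 <= Rpower (2 + ln J) beta) by (apply Rle_Rpower; lra). rewrite Rpower_1 in Hq by lra. lra. }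


  assert (Hcc : cc beta j * (4 * ln (1 + J)) <= 4 * Rpower 2 beta).
  { unfold cc. fold J. pose proof (Rpower_pos (2 + ln J) beta). pose proof (Rpower_pos 2 beta).
    apply (Rmult_le_reg_r (Rpower (2 + ln J) beta)). lra.
    replace (Rpower 2 beta / Rpower (2 + ln J) beta * (4 * ln (1 + J)) * Rpower (2 + ln J) beta)
      with (Rpower 2 beta * (4 * ln (1 + J))) by (field; lra).
    nra. }
  pose proof (cc_pos beta j).
  assert (cc beta j * TT J m <= cc beta j * (2 * ln (1 + J))) by (apply Rmult_le_compat_l; lra).
  unfold Rdiv in *. 
  replace (0 * / s) with 0 by ring.
  nra.
Qed.
Lemma series_bound (a : nat -> R) (C : R) :
  (forall n, 0 <= a n) -> (forall N, sum_n a N <= C) ->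
  ex_series a /\ Series a <= C.
Proof.
  intros Ha HC.
  assert (Hinc : forall n, sum_n a n <= sum_n a (S n)).
  { intros n. rewrite sum_Sn. unfold plus; simpl. specialize (Ha (S n)). lra. }
  destruct (ex_finite_lim_seq_incr _ C Hinc HC) as [l Hl].
  assert (Hs : is_series a l) by exact Hl.
  split. exists l; exact Hs.
  rewrite (is_series_unique _ _ Hs).
  assert (H := is_lim_seq_le _ _ _ _ HC Hl (is_lim_seq_const C)).
  simpl in H. exact H.
Qed.

Lemma tele (a W : nat -> R) : (forall n, a n <= W (S n) - W n) ->
  forall N, sum_n a N <= W (S N) - W O.
Proof.
  intros H N. induction N as [|N IH].
  - rewrite sum_O. specialize (H O). lra.
  - rewrite sum_Sn. unfold plus; simpl. specialize (H (S N)). lra.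
Qed.

(* sum over l >= 1 is written with the shifted index l = n + 1 *)
Theorem lemma7p1 (beta : R) (hbeta : 1 < beta) :
  exists C : R, forall j : nat, (1 <= j)%nat ->
    ex_series (fun n : nat => term7p1 beta j (S n)) /\
    Series (fun n : nat => term7p1 beta j (S n)) <= C.
Proof.
  exists (2 / (beta - 1) + 4 * Rpower 2 beta + 1).
  intros j Hj. apply series_bound.
  - intros n. unfold term7p1. left. apply Rinv_0_lt_compat.
    apply Rmult_lt_0_compat. pose proof (Rabs_pos (INR j - INR (S n))). lra. apply Rpower_pos.
  - intros N. eapply Rle_trans.
    + apply (tele _ (WW beta j)). intros n. apply step; assumption.
    + apply WW_bound; assumption.
Qed.
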